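(* Let $\mathbb{D}$ be a disk in a Riemann surface with coordinate $\theta$ centered at $0$, let $V$ be a rank $2$ holomorphic vector bundle on $\mathbb{D}$ and $\beta$ a holomorphic section of $K\otimes S^2V$ on $\mathbb{D}$. Assume $\Delta:=\Delta_\beta\neq 0$, $\Delta^{-1}(0)=\{0\}$, and $\Delta$ has a holomorphic square root on $\mathbb{D}$. Let $r$ (resp. $z$) be the vanishing order of $\Delta$ (resp. $\beta$) at $0$. Then: (i) $r/2\geq z$; (ii) if $L_1,L_2\subset V$ are the line subbundles with $\beta\in H^0(K\otimes L_1\otimes L_2)$, there is an exact sequence of sheaves $$0\to L_1\oplus L_2\to V\to\mathcal{O}/\theta^{r/2-z}\mathcal{O}\to 0.$$
   Context: $K$ is the canonical bundle (trivial on the disk). The discriminant is defined fibrewise: for a basis $x,y$ of a $2$-dimensional space and $f=ax^2+bxy+cy^2$, $\Delta_f=(b^2-4ac)(x\wedge y)^2$; $\Delta_\beta$ is the section $\Delta\circ\beta$ of $K^2\otimes(\Lambda^2V)^2$. When $\Delta_\beta\neq0$ has a square root, there are two distinct line subbundles $L_1,L_2\subset V$ with $\beta$ a section of $K\otimes L_1\otimes L_2$. *)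

(* Defs.v *)
From Stdlib Require Import Reals.
From Coquelicot Require Import Coquelicot.

Open Scope C_scope.

Definition near_ball (p : C) (e : R) (z : C) : Prop := (Cmod (z - p) < e)%R.

Definition holo_on (U : C -> Prop) (f : C -> C) : Prop :=
  forall z, U z -> ex_derive (K := C_AbsRing) (V := C_NormedModule) f z.

Definition germ_holo (p : C) (f : C -> C) : Prop :=
  exists e : R, (0 < e)%R /\ holo_on (near_ball p e) f.

Definition eq_near (p : C) (f g : C -> C) : Prop :=
  exists e : R, (0 < e)%R /\ forall w, near_ball p e w -> f w = g w.

Definition in_ideal_pow (p : C) (k : nat) (h : C -> C) : Prop :=
  exists u, germ_holo p u /\ eq_near p h (fun w => (w ^ k) * u w).

Definition vorder0 (f : C -> C) (n : nat) : Prop :=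
  exists e : R, (0 < e)%R /\ exists g, holo_on (near_ball 0 e) g /\ g 0 <> 0 /\
    forall w, near_ball 0 e w -> f w = (w ^ n) * g w.

(* vanishing order at 0 of the section beta = a x^2 + b xy + c y^2 of
   K (x) S^2 V (V trivialised by the frame x,y; K by dtheta):
   theta^n divides all coefficients, and not theta^(n+1). *)
Definition sec_vorder0 (a b c : C -> C) (n : nat) : Prop :=
  exists e : R, (0 < e)%R /\ exists a' b' c',
    holo_on (near_ball 0 e) a' /\ holo_on (near_ball 0 e) b' /\
    holo_on (near_ball 0 e) c' /\
    ~ (a' 0 = 0 /\ b' 0 = 0 /\ c' 0 = 0) /\
    forall w, near_ball 0 e w ->
      a w = (w ^ n) * a' w /\ b w = (w ^ n) * b' w /\ c w = (w ^ n) * c' w.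

Definition discr (a b c : C -> C) (w : C) : C := b w * b w - 4 * a w * c w.

(* Exactness, on the stalk at p, of
     0 -> L1 (+) L2 -> V -> O / theta^k O -> 0
   where L_i = O.v_i with v_i = (p_i, q_i) nowhere vanishing, the first map is
   (s,t) |-> s v1 + t v2 and the second is (x,y) |-> phi1 x + phi2 y mod theta^k. *)
Definition stalk_exact (p : C) (k : nat) (p1 q1 p2 q2 phi1 phi2 : C -> C) : Prop :=
  (forall s t, germ_holo p s -> germ_holo p t ->
     eq_near p (fun w => s w * p1 w + t w * p2 w) (fun _ => 0) ->
     eq_near p (fun w => s w * q1 w + t w * q2 w) (fun _ => 0) ->
     eq_near p s (fun _ => 0) /\ eq_near p t (fun _ => 0)) /\
  (forall x y, germ_holo p x -> germ_holo p y ->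
     (in_ideal_pow p k (fun w => phi1 w * x w + phi2 w * y w) <->
      exists s t, germ_holo p s /\ germ_holo p t /\
        eq_near p x (fun w => s w * p1 w + t w * p2 w) /\
        eq_near p y (fun w => s w * q1 w + t w * q2 w))) /\
  (forall g, germ_holo p g ->
     exists x y, germ_holo p x /\ germ_holo p y /\
       in_ideal_pow p k (fun w => phi1 w * x w + phi2 w * y w - g w)).

(* Main.v *)
Require Import Defs.
From Stdlib Require Import Reals Lra Lia Classical FunctionalExtensionality.
From Coquelicot Require Import Coquelicot.
Open Scope C_scope.


Definition cont_at (f : C -> C) (x : C) : Prop :=
  forall eps : R, (0 < eps)%R -> exists d : R, (0 < d)%R /\
    forall y, (Cmod (y - x) < d)%R -> (Cmod (f y - f x) < eps)%R.

Notation exd f x := (ex_derive (K := C_AbsRing) (V := C_NormedModule) f x).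
Notation isd f x l := (is_derive (K := C_AbsRing) (V := C_NormedModule) f x l).

Lemma exd_cont (f : C -> C) (x : C) : exd f x -> cont_at f x.
Proof.
  intros H eps Heps.
  pose proof (ex_derive_continuous f x H) as Hc.
  assert (H1 := proj1 (filterlim_locally_ball_norm (F:=@locally (AbsRing_UniformSpace C_AbsRing) x) f (f x)) Hc (mkposreal eps Heps)).
  destruct H1 as [d Hd]. exists d. split. apply cond_pos.
  intros y Hy. apply (Hd y). exact Hy.
Qed.

Lemma isd_eps (f : C -> C) (x l : C) :
  (forall eps : R, (0 < eps)%R -> exists d : R, (0 < d)%R /\
     forall y, (Cmod (y - x) < d)%R -> (Cmod (f y - f x - (y - x) * l) <= eps * Cmod (y - x))%R) ->
  isd f x l.
Proof.
  intros H. split.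
  - apply is_linear_scal_l.
  - intros x' Hx'. apply (is_filter_lim_locally_unique (K:=C_AbsRing) (V:=AbsRing_NormedModule C_AbsRing)) in Hx'. subst x'.
    intros eps.
    destruct (H eps (cond_pos eps)) as [d [Hd1 Hd2]].
    exists (mkposreal d Hd1). intros y Hy. apply Hd2. exact Hy.
Qed.

Lemma isd_to_abs (f : C -> C) (x l : C) : isd f x l -> is_derive (K:=C_AbsRing) (V:=AbsRing_NormedModule C_AbsRing) f x l.
Proof. intros [_ H]. split; [apply is_linear_scal_l|]. intros x' Hx' eps. exact (H x' Hx' eps). Qed.
Lemma isd_of_abs (f : C -> C) (x l : C) : is_derive (K:=C_AbsRing) (V:=AbsRing_NormedModule C_AbsRing) f x l -> isd f x l.
Proof. intros [_ H]. split; [apply is_linear_scal_l|]. intros x' Hx' eps. exact (H x' Hx' eps). Qed.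

Lemma exd_plus (f g : C -> C) (x : C) : exd f x -> exd g x -> exd (fun y => f y + g y) x.
Proof. intros [l1 H1] [l2 H2]. eexists. apply (is_derive_plus f g x _ _ H1 H2). Qed.
Lemma exd_minus (f g : C -> C) (x : C) : exd f x -> exd g x -> exd (fun y => f y - g y) x.
Proof. intros [l1 H1] [l2 H2]. eexists. apply (is_derive_minus f g x _ _ H1 H2). Qed.
Lemma exd_opp (f : C -> C) (x : C) : exd f x -> exd (fun y => - f y) x.
Proof. intros [l1 H1]. eexists. apply (is_derive_opp f x _ H1). Qed.
Lemma exd_mult (f g : C -> C) (x : C) : exd f x -> exd g x -> exd (fun y => f y * g y) x.
Proof. intros [l1 H1] [l2 H2]. eexists. apply isd_of_abs. exact (is_derive_mult (K:=C_AbsRing) f g x l1 l2 (isd_to_abs _ _ _ H1) (isd_to_abs _ _ _ H2) Cmult_comm). Qed.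
Lemma exd_const (a : C) (x : C) : exd (fun _ => a) x.
Proof. eexists. apply (is_derive_const (K:=C_AbsRing) (V:=C_NormedModule) a x). Qed.
Lemma exd_id (x : C) : exd (fun y => y) x.
Proof. exists one. apply isd_of_abs. exact (is_derive_id (K:=C_AbsRing) x). Qed.
Lemma exd_comp (f g : C -> C) (x : C) : exd f (g x) -> exd g x -> exd (fun y => f (g y)) x.
Proof. intros [l1 H1] [l2 H2]. eexists. exact (is_derive_comp (K:=C_AbsRing) (V:=C_NormedModule) f g x l1 l2 H1 (isd_to_abs _ _ _ H2)). Qed.
Lemma exd_pow (f : C -> C) (n : nat) (x : C) : exd f x -> exd (fun y => f y ^ n) x.
Proof.
  intros H. induction n as [|n IH]; simpl.
  - apply exd_const.
  - apply exd_mult; auto.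
Qed.
Lemma exd_ext (f g : C -> C) (x : C) : (forall y, f y = g y) -> exd f x -> exd g x.
Proof. intros E H. replace g with f; auto. apply functional_extensionality; auto. Qed.

Lemma Cmod_sub_sym (a b : C) : Cmod (a - b) = Cmod (b - a).
Proof. replace (a - b) with (- (b - a)) by ring. apply Cmod_opp. Qed.

Lemma Cmod_tri_sub (a b : C) : (Cmod a - Cmod b <= Cmod (a - b))%R.
Proof.
  assert (H := Cmod_triangle (a - b) b). replace (a - b + b) with a in H by ring. lra.
Qed.

Lemma isd_inv (x : C) : x <> 0 -> isd (fun y => / y) x (- / (x * x)).
Proof.
  intros Hx. apply isd_eps. intros eps Heps.
  assert (Hm : (0 < Cmod x)%R) by (apply Cmod_gt_0; auto).
  set (m := Cmod x) in *.
  exists (Rmin (m/2) (eps * (m*m*m) / 2)). split.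
  { apply Rmin_pos; [lra|]. apply Rmult_lt_0_compat; [|lra].
    apply Rmult_lt_0_compat; auto. apply Rmult_lt_0_compat; auto. apply Rmult_lt_0_compat; auto. }
  intros y Hy.
  assert (Hy1 : (Cmod (y - x) < m/2)%R) by (eapply Rlt_le_trans; [exact Hy| apply Rmin_l]).
  assert (Hy2 : (Cmod (y - x) < eps * (m*m*m)/2)%R) by (eapply Rlt_le_trans; [exact Hy| apply Rmin_r]).
  assert (Hn : (m/2 <= Cmod y)%R).
  { assert (H := Cmod_tri_sub x (x - y)). replace (x - (x - y)) with y in H by ring.
    rewrite Cmod_sub_sym in H. fold m in H. lra. }
  assert (Hy0 : y <> 0). { intro E. subst y. rewrite Cmod_0 in Hn. lra. }
  replace (/ y - / x - (y - x) * - / (x * x)) with ((y - x) * (y - x) / (x * x * y)) by (field; auto).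
  rewrite Cmod_div by (repeat apply Cmult_neq_0; auto).
  rewrite !Cmod_mult. fold m. set (t := Cmod (y - x)) in *. set (n := Cmod y) in *.
  assert (Ht : (0 <= t)%R) by apply Cmod_ge_0.
  apply Rle_div_l. { apply Rmult_lt_0_compat; [apply Rmult_lt_0_compat|]; lra. }
  assert (m*m*m <= 2 * (m*m*n))%R.
  { assert (0 < m*m)%R by (apply Rmult_lt_0_compat; lra). nra. }
  assert (t <= eps * (m*m*n))%R by nra.
  nra.
Qed.

Lemma exd_inv (f : C -> C) (x : C) : exd f x -> f x <> 0 -> exd (fun y => / f y) x.
Proof.
  intros H Hf. apply (exd_comp (fun y => / y) f x); auto.
  eexists. apply isd_inv; auto.
Qed.

Lemma exd_div (f g : C -> C) (x : C) : exd f x -> exd g x -> g x <> 0 -> exd (fun y => f y / g y) x.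
Proof. intros. apply exd_mult; auto. apply exd_inv; auto. Qed.


Definition Csq (z : C) : C :=
  (sqrt ((Cmod z + Re z)/2),
   if Rle_dec 0 (Im z) then sqrt ((Cmod z - Re z)/2) else (- sqrt ((Cmod z - Re z)/2))%R).

Lemma Cmod_facts (z : C) : (Cmod z * Cmod z = Re z * Re z + Im z * Im z)%R /\ (0 <= Cmod z)%R.
Proof.
  split; [|apply Cmod_ge_0].
  destruct z as [x y]. unfold Cmod. simpl. rewrite sqrt_sqrt; [ring|]. nra.
Qed.

Lemma Csq_sq z : Csq z * Csq z = z.
Proof.
  destruct (Cmod_facts z) as [Hm Hm0].
  destruct z as [x y]. unfold Csq. simpl in *.
  set (m := Cmod (x,y)) in *.
  assert (H1 : (0 <= (m + x)/2)%R) by nra.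
  assert (H2 : (0 <= (m - x)/2)%R) by nra.
  assert (HA := sqrt_sqrt _ H1). assert (HB := sqrt_sqrt _ H2).
  assert (HAB : (sqrt ((m + x)/2) * sqrt ((m - x)/2) = Rabs y / 2)%R).
  { rewrite <- sqrt_mult by lra.
    replace ((m + x) / 2 * ((m - x) / 2))%R with ((Rabs y / 2) * (Rabs y / 2))%R.
    - apply sqrt_square. assert (0 <= Rabs y)%R by apply Rabs_pos. lra.
    - replace ((Rabs y / 2) * (Rabs y / 2))%R with (Rabs y * Rabs y / 4)%R by field.
      rewrite <- Rabs_mult. rewrite Rabs_pos_eq by nra. nra. }
  unfold Cmult. simpl.
  destruct (Rle_dec 0 y) as [Hy|Hy].
  - rewrite Rabs_pos_eq in HAB by lra. f_equal; nra.
  - rewrite Rabs_left in HAB by lra. f_equal; nra.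
Qed.

Lemma Csq_re_nonneg z : (0 <= Re (Csq z))%R.
Proof. unfold Csq. simpl. apply sqrt_pos. Qed.

Lemma Csq_re_pos z : (0 < Re z)%R -> (0 < Re (Csq z))%R.
Proof.
  intros H. destruct (Cmod_facts z) as [Hm Hm0].
  unfold Csq. simpl. apply sqrt_lt_R0.
  assert (Re z <= Cmod z)%R by nra. lra.
Qed.

Lemma Cmod_ge_re (c : C) : (Re c <= Cmod c)%R.
Proof. assert (H := re_le_Cmod c). assert (Re c <= Rabs (Re c))%R by apply Rle_abs. lra. Qed.

Lemma isd_Csq z0 : (0 < Re z0)%R -> isd Csq z0 (/ (2 * Csq z0)).
Proof.
  intros Hz. apply isd_eps. intros eps Heps.
  set (q := Csq z0).
  assert (HR : (0 < Re q)%R) by (apply Csq_re_pos; auto).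
  set (R0 := Re q) in *.
  assert (Hq : q <> 0). { intro E. unfold R0 in HR. rewrite E in HR. simpl in HR. lra. }
  assert (HqR : (R0 <= Cmod q)%R) by apply Cmod_ge_re.
  exists (eps * 2 * (R0 * R0 * R0))%R. split.
  { repeat apply Rmult_lt_0_compat; lra. }
  intros y Hy.
  set (s := Csq y).
  assert (HsR : (0 <= Re s)%R) by apply Csq_re_nonneg.
  assert (HP : (R0 <= Cmod (s + q))%R).
  { assert (H := Cmod_ge_re (s + q)). assert (E : Re (s + q) = (Re s + Re q)%R) by reflexivity.
    unfold R0. lra. }
  assert (HP0 : s + q <> 0). { intro E. rewrite E, Cmod_0 in HP. lra. }
  assert (Eyx : y - z0 = (s - q) * (s + q)).
  { unfold s, q. rewrite <- (Csq_sq y) at 1. rewrite <- (Csq_sq z0) at 1. ring. }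
  assert (Esq : s - q = (y - z0) / (s + q)) by (rewrite Eyx; field; auto).
  replace (s - q - (y - z0) * / (2 * q)) with (- ((s - q) * (s - q)) / (2 * q)).
  2:{ rewrite Eyx. field. auto. }
  assert (H2q : 2 * q <> 0). { apply Cmult_neq_0; auto. intro E. injection E. lra. }
  rewrite Cmod_div by auto. rewrite Cmod_opp, Cmod_mult, Esq, Cmod_div by auto.
  rewrite Cmod_mult.
  replace (Cmod 2) with 2%R by (rewrite Cmod_R, Rabs_pos_eq; lra).
  set (t := Cmod (y - z0)) in *. set (P := Cmod (s + q)) in *. set (Q := Cmod q) in *.
  assert (0 <= t)%R by apply Cmod_ge_0.
  assert (HP1 : (0 < P)%R) by lra.
  assert (HQ1 : (0 < Q)%R) by lra.
  apply Rle_div_l. nra.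
  assert (t / P <= t / R0)%R. { apply Rmult_le_compat_l; auto. apply Rinv_le_contravar; lra. }
  assert (0 <= t / P)%R. { apply Rmult_le_pos; auto. left; apply Rinv_0_lt_compat; lra. }
  assert (t / R0 * R0 = t)%R by (field; lra).
  assert (t / P * (t / P) <= t / R0 * (t / R0))%R by nra.
  assert (t <= eps * 2 * (R0 * R0 * R0))%R by lra.
  assert (t / R0 * (t / R0) * (R0*R0*R0) = t * t * R0)%R by (field; lra).
  assert (t / R0 * (t / R0) <= eps * t * 2 * R0)%R.
  { apply (Rmult_le_reg_r (R0*R0)). nra.
    assert (t / R0 * (t / R0) * (R0*R0) = t * t)%R by (field; lra). nra. }
  nra.
Qed.


Lemma near_ball_center (p : C) e : (0 < e)%R -> near_ball p e p.
Proof. intros. unfold near_ball. replace (p - p) with (RtoC 0) by ring. rewrite Cmod_0. auto. Qed.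

Lemma holo_sqrt (e : R) (g : C -> C) : (0 < e)%R -> holo_on (near_ball 0 e) g -> g 0 <> 0 ->
  exists e' s, (0 < e')%R /\ holo_on (near_ball 0 e') s /\ s 0 <> 0 /\
    forall w, near_ball 0 e' w -> s w * s w = g w.
Proof.
  intros He Hg Hg0.
  set (g0 := g 0) in *.
  set (c := Csq g0).
  assert (Hc : c * c = g0) by apply Csq_sq.
  assert (Hgc := exd_cont g 0 (Hg 0 (near_ball_center 0 e He))).
  assert (Hm : (0 < Cmod g0)%R) by (apply Cmod_gt_0; auto).
  destruct (Hgc (Cmod g0 / 2)%R ltac:(lra)) as [d [Hd Hd']].
  set (G := fun w => g w * / g0).
  assert (HG : forall w, (Cmod w < d)%R -> (0 < Re (G w))%R).
  { intros w Hw. specialize (Hd' w). replace (w - 0) with w in Hd' by ring.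
    specialize (Hd' Hw). fold g0 in Hd'.
    assert (E : G w - 1 = (g w - g0) / g0) by (unfold G; field; auto).
    assert (H1 : (Cmod (G w - 1) < 1/2)%R).
    { rewrite E, Cmod_div by auto. apply Rlt_div_l; lra. }
    assert (H2 := re_le_Cmod (G w - 1)).
    assert (E2 : Re (G w - 1) = (Re (G w) - 1)%R) by (simpl; ring).
    rewrite E2 in H2. apply Rabs_le_between in H2. lra. }
  exists (Rmin e d), (fun w => c * Csq (G w)). split; [apply Rmin_pos; auto|]. split; [|split].
  - intros w Hw. unfold near_ball in Hw. replace (w - 0) with w in Hw by ring.
    assert (Hwe : (Cmod w < e)%R) by (eapply Rlt_le_trans; [exact Hw|apply Rmin_l]).
    assert (Hwd : (Cmod w < d)%R) by (eapply Rlt_le_trans; [exact Hw|apply Rmin_r]).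
    apply exd_mult; [apply exd_const|].
    apply (exd_comp Csq G w).
    + eexists. apply isd_Csq. apply HG; auto.
    + unfold G. apply exd_mult; [|apply exd_const]. apply Hg. unfold near_ball.
      replace (w - 0) with w by ring. auto.
  - intro E. assert (E2 : (c * Csq (G 0)) * (c * Csq (G 0)) = g0).
    { replace ((c * Csq (G 0)) * (c * Csq (G 0))) with ((c * c) * (Csq (G 0) * Csq (G 0))) by ring.
      rewrite Csq_sq, Hc. unfold G. fold g0. field. auto. }
    rewrite E in E2. rewrite Cmult_0_l in E2. auto.
  - intros w Hw.
    replace ((c * Csq (G w)) * (c * Csq (G w))) with ((c * c) * (Csq (G w) * Csq (G w))) by ring.
    rewrite Csq_sq, Hc. unfold G. field. auto.
Qed.

Lemma cont_eq_punct (F G : C -> C) (p : C) (e : R) : (0 < e)%R -> cont_at F p -> cont_at G p ->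
  (forall w, (Cmod (w - p) < e)%R -> w <> p -> F w = G w) -> F p = G p.
Proof.
  intros He HF HG H. apply NNPP. intro Hne.
  assert (Hn : (0 < Cmod (F p - G p))%R). { apply Cmod_gt_0. intro E. apply Hne. 
    replace (F p) with (F p - G p + G p) by ring. rewrite E. ring. }
  set (eta := Cmod (F p - G p)) in *.
  destruct (HF (eta/2)%R ltac:(lra)) as [d1 [Hd1 H1]].
  destruct (HG (eta/2)%R ltac:(lra)) as [d2 [Hd2 H2]].
  set (delta := (Rmin e (Rmin d1 d2) / 2)%R).
  assert (Hdp : (0 < delta)%R). { unfold delta. assert (0 < Rmin e (Rmin d1 d2))%R by (repeat apply Rmin_pos; auto). lra. }
  assert (Hdm : (delta < Rmin e (Rmin d1 d2))%R). { unfold delta. assert (0 < Rmin e (Rmin d1 d2))%R by (repeat apply Rmin_pos; auto). lra. }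
  assert (Hde : (delta < e)%R) by (eapply Rlt_le_trans; [exact Hdm| apply Rmin_l]).
  assert (Hd12 : (delta < Rmin d1 d2)%R) by (eapply Rlt_le_trans; [exact Hdm| apply Rmin_r]).
  assert (Hdd1 : (delta < d1)%R) by (eapply Rlt_le_trans; [exact Hd12| apply Rmin_l]).
  assert (Hdd2 : (delta < d2)%R) by (eapply Rlt_le_trans; [exact Hd12| apply Rmin_r]).
  set (w := p + RtoC delta).
  assert (Hw : Cmod (w - p) = delta).
  { unfold w. replace (p + RtoC delta - p) with (RtoC delta) by ring. rewrite Cmod_R. apply Rabs_pos_eq. lra. }
  assert (Hwp : w <> p). { intro E. rewrite E in Hw. replace (p - p) with (RtoC 0) in Hw by ring.
    rewrite Cmod_0 in Hw. lra. }
  assert (Ew := H w ltac:(lra) Hwp).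
  specialize (H1 w ltac:(lra)). specialize (H2 w ltac:(lra)).
  assert (E : F p - G p = - (F w - F p) + (G w - G p)) by (rewrite Ew; ring).
  assert (T := Cmod_triangle (- (F w - F p)) (G w - G p)). rewrite <- E, Cmod_opp in T.
  fold eta in T. lra.
Qed.


Lemma Cmult_integral (a b : C) : a * b = 0 -> a = 0 \/ b = 0.
Proof.
  intros H. destruct (classic (a = 0)); auto. destruct (classic (b = 0)); auto.
  exfalso. apply (Cmult_neq_0 a b); auto.
Qed.

Lemma sq_one (z : C) : z * z = 1 -> z = 1 \/ z = -1.
Proof.
  intros H. assert (E : (z - 1) * (z + 1) = 0) by (replace ((z - 1) * (z + 1)) with (z * z - 1) by ring; rewrite H; ring).
  destruct (Cmult_integral _ _ E) as [E1|E1]; [left|right].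
  - replace z with (z - 1 + 1) by ring. rewrite E1. ring.
  - replace z with (z + 1 - 1) by ring. rewrite E1. ring.
Qed.

Definition clamp (t : R) : R := Rmax 0 (Rmin 1 t).

Lemma clamp_range t : (0 <= clamp t <= 1)%R.
Proof. unfold clamp, Rmax, Rmin. repeat destruct Rle_dec; lra. Qed.

Lemma clamp_lip t u : (Rabs (clamp t - clamp u) <= Rabs (t - u))%R.
Proof. unfold clamp, Rmax, Rmin. repeat destruct Rle_dec; apply Rabs_le; split_Rabs; lra. Qed.

Lemma clamp_id t : (0 <= t <= 1)%R -> clamp t = t.
Proof. intros. unfold clamp, Rmax, Rmin. repeat destruct Rle_dec; lra. Qed.


Lemma seg_const (F : C -> C) (e : R) (HF : forall w : C, w <> 0 -> (Cmod w < e)%R -> cont_at F w /\ F w * F w = 1) (w1 w2 : C) :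
  (forall t : R, (0 <= t <= 1)%R -> w1 + RtoC t * (w2 - w1) <> 0 /\ (Cmod (w1 + RtoC t * (w2 - w1)) < e)%R) ->
  F w1 = F w2.
Proof.
  intros Hseg.
  set (gam := fun t : R => w1 + RtoC (clamp t) * (w2 - w1)).
  set (h := fun t : R => Re (F (gam t))).
  assert (Hgam : forall t, gam t <> 0 /\ (Cmod (gam t) < e)%R) by (intros t; apply Hseg, clamp_range).
  assert (Hval : forall t, h t = 1%R \/ h t = (-1)%R).
  { intros t. destruct (Hgam t) as [A B]. destruct (HF _ A B) as [_ C1].
    unfold h. destruct (sq_one _ C1) as [E|E]; rewrite E; simpl; [left|right]; lra. }
  assert (Hcont : continuity h).
  { intros t0 eps Heps.
    destruct (Hgam t0) as [A B]. destruct (HF _ A B) as [Hc _].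
    destruct (Hc eps Heps) as [d [Hd Hd']].
    set (M := (Cmod (w2 - w1) + 1)%R).
    assert (HM : (0 < M)%R) by (unfold M; assert (H := Cmod_ge_0 (w2 - w1)); lra).
    exists (d / M)%R. split. { apply Rdiv_lt_0_compat; auto. }
    intros t [_ Ht]. simpl in Ht. unfold R_dist in *. simpl. unfold R_dist.
    assert (Hg : (Cmod (gam t - gam t0) < d)%R).
    { unfold gam. replace (w1 + RtoC (clamp t) * (w2 - w1) - (w1 + RtoC (clamp t0) * (w2 - w1)))
        with (RtoC (clamp t - clamp t0) * (w2 - w1)).
      2:{ rewrite RtoC_minus. ring. }
      rewrite Cmod_mult, Cmod_R.
      assert (H1 := clamp_lip t t0).
      assert (H2 := Cmod_ge_0 (w2 - w1)).
      assert (H3 : (Rabs (t - t0) * M < d)%R).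
      { apply (Rmult_lt_compat_r M) in Ht; auto. unfold Rdiv in Ht. rewrite Rmult_assoc, Rinv_l in Ht; lra. }
      assert (0 <= Rabs (clamp t - clamp t0))%R by apply Rabs_pos.
      unfold M in H3. nra. }
    specialize (Hd' _ Hg).
    unfold h. assert (H := re_le_Cmod (F (gam t) - F (gam t0))).
    assert (E : Re (F (gam t) - F (gam t0)) = (Re (F (gam t)) - Re (F (gam t0)))%R).
    { generalize (F (gam t)) (F (gam t0)). intros [u1 u2] [v1 v2]. simpl. ring. }
    rewrite E in H. lra. }
  assert (Hg0 : gam 0%R = w1).
  { unfold gam. rewrite clamp_id by lra. ring. }
  assert (Hg1 : gam 1%R = w2).
  { unfold gam. rewrite clamp_id by lra. ring. }
  destruct (Hgam 0%R) as [A0 B0]. destruct (HF _ A0 B0) as [_ C0].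
  destruct (Hgam 1%R) as [A1 B1]. destruct (HF _ A1 B1) as [_ C1].
  rewrite Hg0 in C0. rewrite Hg1 in C1.
  destruct (sq_one _ C0) as [E0|E0]; destruct (sq_one _ C1) as [E1|E1];
    try (rewrite E0, E1; reflexivity); exfalso.
  - destruct (IVT_cor h 0 1 Hcont ltac:(lra)) as [z [_ Hz]].
    { unfold h. rewrite Hg0, Hg1, E0, E1. simpl. lra. }
    destruct (Hval z); lra.
  - destruct (IVT_cor h 0 1 Hcont ltac:(lra)) as [z [_ Hz]].
    { unfold h. rewrite Hg0, Hg1, E0, E1. simpl. lra. }
    destruct (Hval z); lra.
Qed.

Lemma conv_ball (e : R) (w1 w2 : C) (t : R) : (Cmod w1 < e)%R -> (Cmod w2 < e)%R -> (0 <= t <= 1)%R ->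
  (Cmod (w1 + RtoC t * (w2 - w1)) < e)%R.
Proof.
  intros H1 H2 Ht.
  replace (w1 + RtoC t * (w2 - w1)) with (RtoC (1 - t) * w1 + RtoC t * w2) by (rewrite RtoC_minus; ring).
  eapply Rle_lt_trans; [apply Cmod_triangle|].
  rewrite !Cmod_mult, !Cmod_R, !Rabs_pos_eq by lra.
  destruct (Req_dec t 1). { subst. nra. } nra.
Qed.

Lemma sign_const (F : C -> C) (e : R) (HF : forall w : C, w <> 0 -> (Cmod w < e)%R -> cont_at F w /\ F w * F w = 1) (w1 w2 : C) : w1 <> 0 -> (Cmod w1 < e)%R -> w2 <> 0 -> (Cmod w2 < e)%R -> F w1 = F w2.
Proof.
  intros A1 B1 A2 B2.
  destruct (classic (forall t : R, (0 <= t <= 1)%R -> w1 + RtoC t * (w2 - w1) <> 0)) as [Hs|Hs].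
  { apply (seg_const F e HF). intros t Ht. split; auto. apply conv_ball; auto. }
  apply not_all_ex_not in Hs. destruct Hs as [t0 Ht0].
  apply imply_to_and in Ht0. destruct Ht0 as [Ht0 E0]. apply NNPP in E0.
  set (w3 := Ci * w1).
  assert (A3 : w3 <> 0). { unfold w3. apply Cmult_neq_0; auto. intro E. injection E. lra. }
  assert (B3 : (Cmod w3 < e)%R). { unfold w3. rewrite Cmod_mult, Cmod_Ci. lra. }
  assert (Ht00 : t0 <> 0%R). { intro E. subst t0. apply A1. rewrite <- E0. ring. }
  transitivity (F w3).
  - apply (seg_const F e HF). intros t Ht. split; [|apply conv_ball; auto].
    intro E. replace (w1 + RtoC t * (w3 - w1)) with (w1 * (1 - RtoC t + RtoC t * Ci)) in E by (unfold w3; ring).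
    destruct (Cmult_integral _ _ E) as [E1|E1]; [auto|].
    assert (Er := f_equal fst E1). assert (Ei := f_equal snd E1). simpl in Er, Ei. lra.
  - apply (seg_const F e HF). intros t Ht. split; [|apply conv_ball; auto].
    intro E.
    assert (E2 : w1 * (RtoC t0 * Ci * (1 - RtoC t) + RtoC t * (RtoC t0 - 1)) = 0).
    { replace (w1 * (RtoC t0 * Ci * (1 - RtoC t) + RtoC t * (RtoC t0 - 1)))
        with (RtoC t0 * (w3 + RtoC t * (w2 - w3)) - RtoC t * (w1 + RtoC t0 * (w2 - w1))) by (unfold w3; ring).
      rewrite E, E0. ring. }
    destruct (Cmult_integral _ _ E2) as [E1|E1]; [auto|].
    assert (Er := f_equal fst E1). assert (Ei := f_equal snd E1). simpl in Er, Ei.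
    assert (Ht1 : t = 1%R) by nra. subst t.
    assert (Ht01 : t0 = 1%R) by nra. subst t0.
    apply A2. rewrite <- E0. ring.
Qed.


Definition ev (p : C) (P : C -> Prop) : Prop :=
  exists e : R, (0 < e)%R /\ forall w, near_ball p e w -> P w.

Lemma ev_and (p : C) (P Q : C -> Prop) : ev p P -> ev p Q -> ev p (fun w => P w /\ Q w).
Proof.
  intros [e1 [He1 H1]] [e2 [He2 H2]]. exists (Rmin e1 e2). split; [apply Rmin_pos; auto|].
  intros w Hw. unfold near_ball in Hw. split; [apply H1|apply H2]; unfold near_ball;
  eapply Rlt_le_trans; eauto; [apply Rmin_l|apply Rmin_r].
Qed.

Lemma ev_imp (p : C) (P Q : C -> Prop) : ev p P -> (forall w, P w -> Q w) -> ev p Q.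
Proof. intros [e [He H]] HPQ. exists e. split; auto. Qed.

Lemma ev_center (p : C) (P : C -> Prop) : ev p P -> P p.
Proof. intros [e [He H]]. apply H. apply near_ball_center; auto. Qed.

Lemma germ_ev (p : C) (f : C -> C) : germ_holo p f -> ev p (fun w => exd f w).
Proof. auto. Qed.
Lemma ev_germ (p : C) (f : C -> C) : ev p (fun w => exd f w) -> germ_holo p f.
Proof. auto. Qed.
Lemma eqn_ev (p : C) (f g : C -> C) : eq_near p f g -> ev p (fun w => f w = g w).
Proof. auto. Qed.
Lemma ev_eqn (p : C) (f g : C -> C) : ev p (fun w => f w = g w) -> eq_near p f g.
Proof. auto. Qed.

Lemma ev_nonzero (p : C) (f : C -> C) : exd f p -> f p <> 0 -> ev p (fun w => f w <> 0).
Proof.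
  intros Hf Hp. destruct (exd_cont f p Hf (Cmod (f p)) ltac:(apply Cmod_gt_0; auto)) as [d [Hd H]].
  exists d. split; auto. intros w Hw E. specialize (H w Hw). rewrite E in H.
  replace (0 - f p) with (- f p) in H by ring. rewrite Cmod_opp in H. lra.
Qed.

Lemma germ_center (p : C) (f : C -> C) : germ_holo p f -> exd f p.
Proof. intros H. apply (ev_center p (fun w => exd f w) H). Qed.

Lemma germ_plus (p : C) (f g : C -> C) : germ_holo p f -> germ_holo p g -> germ_holo p (fun w => f w + g w).
Proof. intros A B. apply ev_germ. eapply ev_imp; [apply (ev_and _ _ _ A B)|]. intros w [X Y]. apply exd_plus; auto. Qed.
Lemma germ_minus (p : C) (f g : C -> C) : germ_holo p f -> germ_holo p g -> germ_holo p (fun w => f w - g w).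
Proof. intros A B. apply ev_germ. eapply ev_imp; [apply (ev_and _ _ _ A B)|]. intros w [X Y]. apply exd_minus; auto. Qed.
Lemma germ_mult (p : C) (f g : C -> C) : germ_holo p f -> germ_holo p g -> germ_holo p (fun w => f w * g w).
Proof. intros A B. apply ev_germ. eapply ev_imp; [apply (ev_and _ _ _ A B)|]. intros w [X Y]. apply exd_mult; auto. Qed.
Lemma germ_opp (p : C) (f : C -> C) : germ_holo p f -> germ_holo p (fun w => - f w).
Proof. intros A. apply ev_germ. eapply ev_imp; [apply A|]. intros w X. apply exd_opp; auto. Qed.
Lemma germ_const (p : C) (a : C) : germ_holo p (fun _ => a).
Proof. exists 1%R. split; [lra|]. intros w _. apply exd_const. Qed.
Lemma germ_div (p : C) (f g : C -> C) : germ_holo p f -> germ_holo p g -> g p <> 0 -> germ_holo p (fun w => f w / g w).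
Proof.
  intros A B Hg. apply ev_germ.
  assert (N := ev_nonzero p g (germ_center p g B) Hg).
  eapply ev_imp; [apply (ev_and _ _ _ (ev_and _ _ _ A B) N)|]. intros w [[X Y] Z]. apply exd_div; auto.
Qed.

Lemma zero_from_punct (p : C) (s : C -> C) : germ_holo p s -> ev p (fun w => w <> p -> s w = 0) -> eq_near p s (fun _ => 0).
Proof.
  intros Hs [e [He H]].
  assert (Hp : s p = 0).
  { apply (cont_eq_punct s (fun _ => 0) p e He).
    - apply exd_cont, germ_center; auto.
    - intros eps Heps. exists 1%R. split; [lra|]. intros. replace (0 - 0) with (RtoC 0) by ring. rewrite Cmod_0. auto.
    - intros w Hw Hwp. apply H; auto. }
  exists e. split; auto. intros w Hw. destruct (classic (w = p)) as [E|E]. { subst; auto. } apply H; auto.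
Qed.

Lemma parallel (p : C) (p1 q1 X Y : C -> C) : germ_holo p p1 -> germ_holo p q1 -> germ_holo p X -> germ_holo p Y ->
  ~ (p1 p = 0 /\ q1 p = 0) -> ev p (fun w => - q1 w * X w + p1 w * Y w = 0) ->
  exists s, germ_holo p s /\ ev p (fun w => X w = s w * p1 w /\ Y w = s w * q1 w).
Proof.
  intros Hp1 Hq1 HX HY Hv E.
  destruct (classic (p1 p = 0)) as [Z|Z].
  - assert (Zq : q1 p <> 0) by tauto.
    exists (fun w => Y w / q1 w). split; [apply germ_div; auto|].
    assert (N := ev_nonzero p q1 (germ_center p q1 Hq1) Zq).
    eapply ev_imp; [apply (ev_and _ _ _ E N)|]. intros w [E1 N1]. split; [|field; auto].
    replace (X w) with (q1 w * X w / q1 w) by (field; auto).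
    replace (q1 w * X w) with (p1 w * Y w - (- q1 w * X w + p1 w * Y w)) by ring. rewrite E1.
    field. auto.
  - exists (fun w => X w / p1 w). split; [apply germ_div; auto|].
    assert (N := ev_nonzero p p1 (germ_center p p1 Hp1) Z).
    eapply ev_imp; [apply (ev_and _ _ _ E N)|]. intros w [E1 N1]. split; [field; auto|].
    replace (Y w) with (p1 w * Y w / p1 w) by (field; auto).
    replace (p1 w * Y w) with ((- q1 w * X w + p1 w * Y w) + q1 w * X w) by ring. rewrite E1.
    field. auto.
Qed.


Lemma stalk_from_key (p : C) (k : nat) (p1 q1 p2 q2 u : C -> C) :
 germ_holo p p1 -> germ_holo p q1 -> germ_holo p p2 -> germ_holo p q2 -> germ_holo p u ->
 ~ (p1 p = 0 /\ q1 p = 0) -> u p <> 0 ->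
 ev p (fun w => p1 w * q2 w - q1 w * p2 w = w^k * u w) ->
 ev p (fun w => w <> p -> p1 w * q2 w - q1 w * p2 w <> 0) ->
 stalk_exact p k p1 q1 p2 q2 (fun w => - q1 w) (fun w => p1 w).
Proof.
  intros Hp1 Hq1 Hp2 Hq2 Hu Hv Hu0 Hd Hpunct.
  split; [|split].
  - intros s t Hs Ht E1 E2.
    assert (E := ev_and _ _ _ (ev_and _ _ _ E1 E2) Hpunct).
    split; apply zero_from_punct; auto; (eapply ev_imp; [exact E|]); intros w [[F1 F2] F3] Hw;
      specialize (F3 Hw).
    + assert (Z : s w * (p1 w * q2 w - q1 w * p2 w) = 0).
      { replace (s w * (p1 w * q2 w - q1 w * p2 w)) with
          (q2 w * (s w * p1 w + t w * p2 w) - p2 w * (s w * q1 w + t w * q2 w)) by ring.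
        rewrite F1, F2. ring. }
      destruct (Cmult_integral _ _ Z); tauto.
    + assert (Z : t w * (p1 w * q2 w - q1 w * p2 w) = 0).
      { replace (t w * (p1 w * q2 w - q1 w * p2 w)) with
          (p1 w * (s w * q1 w + t w * q2 w) - q1 w * (s w * p1 w + t w * p2 w)) by ring.
        rewrite F1, F2. ring. }
      destruct (Cmult_integral _ _ Z); tauto.
  - intros x y Hx Hy. split.
    + intros [G [HG HE]].
      set (t := fun w => G w / u w).
      assert (Ht : germ_holo p t) by (apply germ_div; auto).
      assert (Nu := ev_nonzero p u (germ_center p u Hu) Hu0).
      destruct (parallel p p1 q1 (fun w => x w - t w * p2 w) (fun w => y w - t w * q2 w)) as [s [Hs Es]]; auto.
      { apply germ_minus; auto. apply germ_mult; auto. }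
      { apply germ_minus; auto. apply germ_mult; auto. }
      { eapply ev_imp; [apply (ev_and _ _ _ (ev_and _ _ _ HE Hd) Nu)|]. intros w [[F1 F2] F3].
        unfold t. 
        replace (- q1 w * (x w - G w / u w * p2 w) + p1 w * (y w - G w / u w * q2 w))
          with ((- q1 w * x w + p1 w * y w) - G w / u w * (p1 w * q2 w - q1 w * p2 w)) by (field; auto).
        rewrite F1, F2. field. auto. }
      exists s, t. split; [auto|]. split; [auto|]. split.
      * apply ev_eqn. eapply ev_imp; [exact Es|]. intros w [F1 F2].
        replace (x w) with ((x w - t w * p2 w) + t w * p2 w) by ring. rewrite F1. ring.
      * apply ev_eqn. eapply ev_imp; [exact Es|]. intros w [F1 F2].
        replace (y w) with ((y w - t w * q2 w) + t w * q2 w) by ring. rewrite F2. ring.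
    + intros [s [t [Hs [Ht [E1 E2]]]]].
      exists (fun w => t w * u w). split; [apply germ_mult; auto|].
      apply ev_eqn. eapply ev_imp; [apply (ev_and _ _ _ (ev_and _ _ _ E1 E2) Hd)|].
      intros w [[F1 F2] F3]. rewrite F1, F2.
      replace (- q1 w * (s w * p1 w + t w * p2 w) + p1 w * (s w * q1 w + t w * q2 w))
        with (t w * (p1 w * q2 w - q1 w * p2 w)) by ring.
      rewrite F3. ring.
  - intros g Hg.
    destruct (classic (p1 p = 0)) as [Z|Z].
    + assert (Zq : q1 p <> 0) by tauto.
      assert (N := ev_nonzero p q1 (germ_center p q1 Hq1) Zq).
      exists (fun w => - g w / q1 w), (fun _ => 0). split; [|split].
      * apply germ_div; auto. apply germ_opp; auto.
      * apply germ_const.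
      * exists (fun _ => 0). split; [apply germ_const|]. apply ev_eqn. eapply ev_imp; [exact N|].
        intros w Nw. simpl. field. auto.
    + assert (N := ev_nonzero p p1 (germ_center p p1 Hp1) Z).
      exists (fun _ => 0), (fun w => g w / p1 w). split; [|split].
      * apply germ_const.
      * apply germ_div; auto.
      * exists (fun _ => 0). split; [apply germ_const|]. apply ev_eqn. eapply ev_imp; [exact N|].
        intros w Nw. simpl. field. auto.
Qed.



Lemma nb0 (e : R) (w : C) : near_ball 0 e w <-> (Cmod w < e)%R.
Proof. unfold near_ball. replace (w - 0) with w by ring. tauto. Qed.

Lemma Cpow_cancel (w : C) (n : nat) (x y : C) : w <> 0 -> w ^ n * x = w ^ n * y -> x = y.
Proof.
  intros Hw E. assert (Hn := Cpow_nz w n Hw).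
  replace x with (/ w ^ n * (w ^ n * x)) by (field; auto).
  rewrite E. field; auto.
Qed.

Lemma punct_center (p : C) (F G : C -> C) : germ_holo p F -> germ_holo p G ->
  ev p (fun w => w <> p -> F w = G w) -> F p = G p.
Proof.
  intros HF HG [e [He H]].
  apply (cont_eq_punct F G p e He); try (apply exd_cont, germ_center; auto).
  intros w Hw Hwp. apply H; auto.
Qed.

Lemma ev_fill (p : C) (F G : C -> C) : germ_holo p F -> germ_holo p G ->
  ev p (fun w => w <> p -> F w = G w) -> ev p (fun w => F w = G w).
Proof.
  intros HF HG H. assert (Hc := punct_center p F G HF HG H).
  eapply ev_imp; [exact H|]. intros w Hw. destruct (classic (w = p)) as [E|E]; [subst; auto|auto].
Qed.

Lemma germ_of_holo (rho : R) (f : C -> C) (p : C) : holo_on (near_ball 0 rho) f -> near_ball 0 rho p ->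
  germ_holo p f.
Proof.
  intros Hf Hp. apply (proj1 (nb0 _ _)) in Hp. exists (rho - Cmod p)%R. split; [lra|].
  intros w Hw. apply Hf. apply (proj2 (nb0 _ _)). unfold near_ball in Hw.
  assert (T := Cmod_triangle (w - p) p). replace (w - p + p) with w in T by ring. lra.
Qed.

Lemma germ_pow_id (p : C) (n : nat) : germ_holo p (fun w => w ^ n).
Proof. exists 1%R. split; [lra|]. intros w _. apply exd_pow, exd_id. Qed.

Lemma part1 (a b c : C -> C) (r z : nat) : vorder0 (discr a b c) r -> sec_vorder0 a b c z -> (2*z <= r)%nat.
Proof.
  intros [e1 [He1 [g [Hg [Hg0 Hr]]]]] [e2 [He2 [a' [b' [c' [Ha' [Hb' [Hc' [Hn Hz]]]]]]]]].
  destruct (Compare_dec.le_lt_dec (2*z) r) as [L|L]; auto. exfalso. apply Hg0.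
  set (D := fun w => b' w * b' w - 4 * a' w * c' w).
  set (n := (2*z - r)%nat).
  set (e := Rmin e1 e2).
  assert (He : (0 < e)%R) by (apply Rmin_pos; auto).
  assert (Eq : forall w, near_ball 0 e w -> w <> 0 -> g w = w ^ n * D w).
  { intros w Hw Hw0. apply (proj1 (nb0 _ _)) in Hw.
    assert (H1 : near_ball 0 e1 w) by (apply (proj2 (nb0 _ _)); eapply Rlt_le_trans; [exact Hw|apply Rmin_l]).
    assert (H2 : near_ball 0 e2 w) by (apply (proj2 (nb0 _ _)); eapply Rlt_le_trans; [exact Hw|apply Rmin_r]).
    specialize (Hr w H1). destruct (Hz w H2) as [Ea [Eb Ec]].
    unfold discr in Hr. rewrite Ea, Eb, Ec in Hr.
    apply (Cpow_cancel w r); auto. rewrite <- Hr. unfold D.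
    replace (w^r * (w^n * (b' w * b' w - 4 * a' w * c' w))) with (w^(r+n) * (b' w * b' w - 4 * a' w * c' w))
      by (rewrite Cpow_add_r; ring).
    replace (r + n)%nat with (z + z)%nat by (unfold n; lia). rewrite Cpow_add_r. ring. }
  assert (H0e1 : near_ball 0 e1 0) by (apply near_ball_center; auto).
  assert (H0e2 : near_ball 0 e2 0) by (apply near_ball_center; auto).
  transitivity ((fun w => w ^ n * D w) 0).
  - change (g 0 = (fun w => w ^ n * D w) 0). apply (cont_eq_punct g (fun w => w ^ n * D w) 0 e He).
    + apply exd_cont. apply Hg. auto.
    + apply exd_cont. specialize (Ha' 0 H0e2). specialize (Hb' 0 H0e2). specialize (Hc' 0 H0e2).
      apply exd_mult; [apply exd_pow, exd_id|]. unfold D.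
      apply exd_minus; [apply exd_mult; auto|]. apply exd_mult; auto. apply exd_mult; auto. apply exd_const.
    + intros w Hw Hw0. apply Eq; auto.
  - simpl. replace n with (S (n - 1)) by (unfold n; lia). simpl. ring.
Qed.


Lemma Cinv_nz (x : C) : x <> 0 -> / x <> 0.
Proof. intros H E. apply C1_nz. rewrite <- (Cinv_r x H), E. ring. Qed.

Lemma sym_nonzero (p1 q1 p2 q2 : C) : ~ (p1 = 0 /\ q1 = 0) -> ~ (p2 = 0 /\ q2 = 0) ->
  ~ (p1 * p2 = 0 /\ p1 * q2 + q1 * p2 = 0 /\ q1 * q2 = 0).
Proof.
  intros H1 H2 [A [B Cc]].
  destruct (Cmult_integral _ _ A) as [E|E].
  - subst p1. assert (q1 <> 0) by tauto.
    destruct (Cmult_integral _ _ Cc) as [E2|E2]; [tauto|]. subst q2.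
    assert (p2 <> 0) by tauto. apply (Cmult_neq_0 q1 p2); auto.
    rewrite <- B. ring.
  - subst p2. assert (q2 <> 0) by tauto.
    destruct (Cmult_integral _ _ Cc) as [E2|E2]; [|tauto]. subst q1.
    assert (p1 <> 0) by tauto. apply (Cmult_neq_0 p1 q2); auto.
    rewrite <- B. ring.
Qed.

Lemma get_fprime (P A f : C -> C) (z : nat) : germ_holo 0 P -> germ_holo 0 A -> P 0 <> 0 ->
  ev 0 (fun w => f w * P w = w ^ z * A w) ->
  exists f', germ_holo 0 f' /\ ev 0 (fun w => f w = w ^ z * f' w).
Proof.
  intros HP HA HP0 E. exists (fun w => A w / P w). split; [apply germ_div; auto|].
  assert (N := ev_nonzero 0 P (germ_center 0 P HP) HP0).
  eapply ev_imp; [apply (ev_and _ _ _ E N)|]. intros w [E1 N1].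
  replace (f w) with (f w * P w / P w) by (field; auto). rewrite E1. field. auto.
Qed.

Lemma neg_pow_odd (x : C) (k : nat) : (- x) ^ (2 * k + 1) = - x ^ (2 * k + 1).
Proof.
  induction k as [|k IH]. { simpl. ring. }
  replace (2 * S k + 1)%nat with (S (S (2 * k + 1))) by lia.
  rewrite !Cpow_S, IH. ring.
Qed.

Lemma key0 (rho : R) (a b c p1 q1 p2 q2 f : C -> C) (r z : nat) :
  (0 < rho)%R ->
  holo_on (near_ball 0 rho) p1 -> holo_on (near_ball 0 rho) q1 ->
  holo_on (near_ball 0 rho) p2 -> holo_on (near_ball 0 rho) q2 ->
  holo_on (near_ball 0 rho) f ->
  (forall w, near_ball 0 rho w -> ~ (p1 w = 0 /\ q1 w = 0)) ->
  (forall w, near_ball 0 rho w -> ~ (p2 w = 0 /\ q2 w = 0)) ->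
  (forall w, near_ball 0 rho w ->
     a w = f w * (p1 w * p2 w) /\
     b w = f w * (p1 w * q2 w + q1 w * p2 w) /\
     c w = f w * (q1 w * q2 w)) ->
  vorder0 (discr a b c) r -> sec_vorder0 a b c z -> (2 * z <= r)%nat ->
  exists u, germ_holo 0 u /\ u 0 <> 0 /\
    ev 0 (fun w => p1 w * q2 w - q1 w * p2 w = w ^ (Nat.div r 2 - z) * u w).
Proof.
  intros Hrho Hp1 Hq1 Hp2 Hq2 Hf Hv1 Hv2 Hfac Hr Hz Hle.
  destruct Hr as [er [Her [g [Hg [Hg0 Hrw]]]]].
  destruct Hz as [ez [Hez [a' [b' [c' [Ha' [Hb' [Hc' [Hn Hzw]]]]]]]]].
  assert (B0 : near_ball 0 rho 0) by (apply near_ball_center; auto).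
  assert (Gp1 : germ_holo 0 p1) by (eapply germ_of_holo; eauto).
  assert (Gq1 : germ_holo 0 q1) by (eapply germ_of_holo; eauto).
  assert (Gp2 : germ_holo 0 p2) by (eapply germ_of_holo; eauto).
  assert (Gq2 : germ_holo 0 q2) by (eapply germ_of_holo; eauto).
  assert (Gf : germ_holo 0 f) by (eapply germ_of_holo; eauto).
  assert (Ga' : germ_holo 0 a') by (exists ez; auto).
  assert (Gb' : germ_holo 0 b') by (exists ez; auto).
  assert (Gc' : germ_holo 0 c') by (exists ez; auto).
  assert (Gg : germ_holo 0 g) by (exists er; auto).
  assert (EvF : ev 0 (fun w => a w = f w * (p1 w * p2 w) /\ b w = f w * (p1 w * q2 w + q1 w * p2 w) /\
     c w = f w * (q1 w * q2 w))) by (exists rho; auto).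
  assert (EvZ : ev 0 (fun w => a w = w ^ z * a' w /\ b w = w ^ z * b' w /\ c w = w ^ z * c' w)) by (exists ez; auto).
  assert (EvR : ev 0 (fun w => discr a b c w = w ^ r * g w)) by (exists er; auto).
  assert (EFZ := ev_and _ _ _ EvF EvZ).
  assert (Ea : ev 0 (fun w => w ^ z * a' w = f w * (p1 w * p2 w))).
  { eapply ev_imp; [exact EFZ|]. intros w [[A1 [A2 A3]] [B1 [B2 B3]]]. congruence. }
  assert (Eb : ev 0 (fun w => w ^ z * b' w = f w * (p1 w * q2 w + q1 w * p2 w))).
  { eapply ev_imp; [exact EFZ|]. intros w [[A1 [A2 A3]] [B1 [B2 B3]]]. congruence. }
  assert (Ec : ev 0 (fun w => w ^ z * c' w = f w * (q1 w * q2 w))).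
  { eapply ev_imp; [exact EFZ|]. intros w [[A1 [A2 A3]] [B1 [B2 B3]]]. congruence. }
  assert (Hsym := sym_nonzero _ _ _ _ (Hv1 0 B0) (Hv2 0 B0)).
  assert (Hf' : exists f', germ_holo 0 f' /\ ev 0 (fun w => f w = w ^ z * f' w)).
  { destruct (classic (p1 0 * p2 0 = 0)) as [Z1|Z1].
    - destruct (classic (p1 0 * q2 0 + q1 0 * p2 0 = 0)) as [Z2|Z2].
      + refine (get_fprime (fun w => q1 w * q2 w) c' f z _ Gc' _ _).
        * apply germ_mult; auto.
        * simpl. intro Z3. tauto.
        * eapply ev_imp; [exact Ec|]. intros w E. simpl. rewrite E. ring.
      + refine (get_fprime (fun w => p1 w * q2 w + q1 w * p2 w) b' f z _ Gb' _ _).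
        * apply germ_plus; apply germ_mult; auto.
        * simpl. auto.
        * eapply ev_imp; [exact Eb|]. intros w E. simpl. rewrite E. ring.
    - refine (get_fprime (fun w => p1 w * p2 w) a' f z _ Ga' _ _).
      * apply germ_mult; auto.
      * simpl. auto.
      * eapply ev_imp; [exact Ea|]. intros w E. simpl. rewrite E. ring. }
  destruct Hf' as [f' [Gf' Ef']].
  assert (Hf0 : f' 0 <> 0).
  { intro E0. apply Hn.
    assert (Hj : forall (Pj Aj : C -> C), germ_holo 0 Pj -> germ_holo 0 Aj ->
       ev 0 (fun w => w ^ z * Aj w = f w * Pj w) -> Aj 0 = 0).
    { intros Pj Aj HPj HAj Ej.
      transitivity ((fun w => f' w * Pj w) 0).
      - apply (punct_center 0 Aj (fun w => f' w * Pj w)); [auto|apply germ_mult; auto|].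
        eapply ev_imp; [apply (ev_and _ _ _ Ef' Ej)|]. intros w [E1 E2] Hw.
        apply (Cpow_cancel w z); auto. rewrite E2, E1. ring.
      - simpl. rewrite E0. ring. }
    split; [|split].
    - apply (Hj (fun w => p1 w * p2 w)); auto. apply germ_mult; auto.
    - apply (Hj (fun w => p1 w * q2 w + q1 w * p2 w)); auto. apply germ_plus; apply germ_mult; auto.
    - apply (Hj (fun w => q1 w * q2 w)); auto. apply germ_mult; auto. }
  set (m := (r - 2 * z)%nat).
  set (d := fun w => p1 w * q2 w - q1 w * p2 w).
  assert (Evh : ev 0 (fun w => w <> 0 -> (f' w * d w) * (f' w * d w) = w ^ m * g w)).
  { eapply ev_imp; [apply (ev_and _ _ _ (ev_and _ _ _ EvF EvR) Ef')|].
    intros w [[[A1 [A2 A3]] R1] F1] Hw.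
    apply (Cpow_cancel w (z + z)); auto.
    replace (w ^ (z + z) * (w ^ m * g w)) with (w ^ r * g w)
      by (rewrite Cmult_assoc, <- Cpow_add_r; f_equal; f_equal; unfold m; lia).
    rewrite <- R1.
    unfold discr. rewrite A1, A2, A3, F1. rewrite Cpow_add_r. unfold d. ring. }
  destruct (holo_sqrt er g Her Hg Hg0) as [es [s [Hes [Hs [Hs0 Hss]]]]].
  assert (Gs : germ_holo 0 s) by (exists es; auto).
  assert (Evs : ev 0 (fun w => s w * s w = g w)) by (exists es; auto).
  assert (Ns := ev_nonzero 0 s (germ_center 0 s Gs) Hs0).
  assert (Nf := ev_nonzero 0 f' (germ_center 0 f' Gf') Hf0).
  assert (Gd : germ_holo 0 d) by (unfold d; apply germ_minus; apply germ_mult; auto).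
  assert (Gh : germ_holo 0 (fun w => f' w * d w)) by (apply germ_mult; auto).
  assert (E := ev_and _ _ _ (ev_and _ _ _ (ev_and _ _ _ Gh Gs) (ev_and _ _ _ Ns Nf)) (ev_and _ _ _ Evs Evh)).
  destruct (Nat.Even_or_Odd m) as [[k' Hk]|[k' Hk]].
  - assert (Hkk : (Nat.div r 2 - z)%nat = k').
    { replace r with ((z + k') * 2)%nat by (unfold m in Hk; lia). rewrite Nat.div_mul by lia. lia. }
    rewrite Hkk.
    destruct E as [e5 [He5 H5]].
    set (F := fun w => (f' w * d w) / (w ^ k' * s w)).
    assert (HF : forall w : C, w <> 0 -> (Cmod w < e5)%R -> cont_at F w /\ F w * F w = 1).
    { intros w Hw Hwe. assert (Hb : near_ball 0 e5 w) by (apply (proj2 (nb0 _ _)); auto).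
      destruct (H5 w Hb) as [[[X1 X2] [X3 X4]] [X5 X6]].
      assert (Hpk := Cpow_nz w k' Hw).
      split.
      - apply exd_cont. unfold F. apply exd_div; auto.
        + apply exd_mult; auto. apply exd_pow, exd_id.
        + apply Cmult_neq_0; auto.
      - unfold F. specialize (X6 Hw).
        assert (Hg0w : g w <> 0). { rewrite <- X5. apply Cmult_neq_0; auto. }
        replace (f' w * d w / (w ^ k' * s w) * (f' w * d w / (w ^ k' * s w)))
          with ((f' w * d w) * (f' w * d w) / ((w ^ k' * w ^ k') * (s w * s w))) by (field; auto).
        rewrite X6, X5, <- Cpow_add_r. replace (k' + k')%nat with m by lia. field. split; auto.
        apply Cpow_nz; auto. }
    set (w0 := RtoC (e5 / 2)).
    assert (Hw0 : w0 <> 0). { unfold w0. intro E0. injection E0. lra. }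
    assert (Hw0e : (Cmod w0 < e5)%R). { unfold w0. rewrite Cmod_R, Rabs_pos_eq; lra. }
    set (eps := F w0).
    assert (Heps : eps * eps = 1) by (apply (HF w0); auto).
    assert (Heps0 : eps <> 0). { intro E0. rewrite E0 in Heps. rewrite Cmult_0_l in Heps.
      apply C1_nz; congruence. }
    exists (fun w => eps * s w / f' w). split; [|split].
    + apply germ_div; auto. apply germ_mult; auto. apply germ_const.
    + apply Cmult_neq_0; [apply Cmult_neq_0; auto|]. apply Cinv_nz. auto.
    + apply ev_fill; [auto| |].
      * apply germ_mult; [apply germ_pow_id|]. apply germ_div; auto. apply germ_mult; auto. apply germ_const.
      * exists e5. split; auto. intros w Hb Hw.
        assert (Hwe : (Cmod w < e5)%R) by (apply (proj1 (nb0 _ _)); auto).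
        destruct (H5 w Hb) as [[[X1 X2] [X3 X4]] [X5 X6]].
        assert (Hpk := Cpow_nz w k' Hw).
        assert (Fw : F w = eps) by (apply (sign_const F e5 HF); auto).
        unfold F in Fw.
        assert (E1 : f' w * d w = eps * (w ^ k' * s w)).
        { rewrite <- Fw. field. split; auto. }
        change (d w = w ^ k' * (eps * s w / f' w)).
        replace (d w) with (f' w * d w / f' w) by (field; auto). rewrite E1. field. auto.
  - exfalso.
    destruct E as [e5 [He5 H5]].
    set (psi := fun w => (f' w * d w) / s w).
    set (del := Rmin 1 e5).
    assert (Hdel : (0 < del)%R) by (apply Rmin_pos; lra).
    set (F := fun w => psi (w * w) / w ^ m).
    assert (HF : forall w : C, w <> 0 -> (Cmod w < del)%R -> cont_at F w /\ F w * F w = 1).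
    { intros w Hw Hwe.
      assert (Hw1 : (Cmod w < 1)%R) by (eapply Rlt_le_trans; [exact Hwe|apply Rmin_l]).
      assert (Hw5 : (Cmod w < e5)%R) by (eapply Rlt_le_trans; [exact Hwe|apply Rmin_r]).
      assert (Hww : w * w <> 0) by (apply Cmult_neq_0; auto).
      assert (Hb : near_ball 0 e5 (w * w)).
      { apply (proj2 (nb0 _ _)). rewrite Cmod_mult. assert (H0 := Cmod_ge_0 w). nra. }
      destruct (H5 _ Hb) as [[[X1 X2] [X3 X4]] [X5 X6]].
      assert (Hpm := Cpow_nz w m Hw).
      split.
      - apply exd_cont. unfold F. apply exd_div; auto; [|apply exd_pow, exd_id].
        apply (exd_comp psi (fun y => y * y) w); [|apply exd_mult; apply exd_id].
        unfold psi. apply exd_div; auto.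
      - unfold F, psi. specialize (X6 Hww).
        assert (Hg0w : g (w * w) <> 0). { rewrite <- X5. apply Cmult_neq_0; auto. }
        replace (f' (w * w) * d (w * w) / s (w * w) / w ^ m * (f' (w * w) * d (w * w) / s (w * w) / w ^ m))
          with ((f' (w * w) * d (w * w)) * (f' (w * w) * d (w * w)) / ((w ^ m * w ^ m) * (s (w * w) * s (w * w))))
          by (field; auto).
        rewrite X6, X5, <- Cpow_mult_l. field. split; auto. apply Cpow_nz; auto. }
    set (w0 := RtoC (del / 2)).
    assert (Hw0 : w0 <> 0). { unfold w0. intro E0. injection E0. lra. }
    assert (Hw0e : (Cmod w0 < del)%R). { unfold w0. rewrite Cmod_R, Rabs_pos_eq; lra. }
    assert (Hmw0 : - w0 <> 0). { intro E0. apply Hw0. replace w0 with (- - w0) by ring. rewrite E0. ring. }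
    assert (Hmw0e : (Cmod (- w0) < del)%R) by (rewrite Cmod_opp; auto).
    assert (Eq := sign_const F del HF w0 (- w0) Hw0 Hw0e Hmw0 Hmw0e).
    assert (Eq2 : F (- w0) = - F w0).
    { unfold F. replace (- w0 * - w0) with (w0 * w0) by ring. rewrite Hk, neg_pow_odd.
      field. apply Cpow_nz; auto. }
    assert (Z : F w0 = 0).
    { assert (2 * F w0 = 0) by (replace (2 * F w0) with (F w0 - F (- w0)) by (rewrite Eq2; ring); rewrite <- Eq; ring).
      destruct (Cmult_integral _ _ H) as [H2|H2]; auto. injection H2. lra. }
    destruct (HF w0 Hw0 Hw0e) as [_ H1]. rewrite Z, Cmult_0_l in H1. apply C1_nz; congruence.
Qed.


Theorem lemma4p9 (rho : R) (a b c : C -> C) (r z : nat) :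
  (0 < rho)%R ->
  holo_on (near_ball 0 rho) a ->
  holo_on (near_ball 0 rho) b ->
  holo_on (near_ball 0 rho) c ->
  (* Delta_beta is not identically zero *)
  (exists w, near_ball 0 rho w /\ discr a b c w <> 0) ->
  (* Delta^{-1}(0) = {0} *)
  (forall w, near_ball 0 rho w -> (discr a b c w = 0 <-> w = 0)) ->
  (* Delta has a holomorphic square root on the disk *)
  (exists sq, holo_on (near_ball 0 rho) sq /\
     forall w, near_ball 0 rho w -> sq w * sq w = discr a b c w) ->
  vorder0 (discr a b c) r ->
  sec_vorder0 a b c z ->
  (2 * z <= r)%nat /\
  forall p1 q1 p2 q2 f : C -> C,
    holo_on (near_ball 0 rho) p1 -> holo_on (near_ball 0 rho) q1 ->
    holo_on (near_ball 0 rho) p2 -> holo_on (near_ball 0 rho) q2 ->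
    holo_on (near_ball 0 rho) f ->
    (* v1 = (p1,q1), v2 = (p2,q2) span line subbundles L1, L2 of V *)
    (forall w, near_ball 0 rho w -> ~ (p1 w = 0 /\ q1 w = 0)) ->
    (forall w, near_ball 0 rho w -> ~ (p2 w = 0 /\ q2 w = 0)) ->
    (* beta = f . v1 v2, i.e. beta is a section of K (x) L1 (x) L2 *)
    (forall w, near_ball 0 rho w ->
       a w = f w * (p1 w * p2 w) /\
       b w = f w * (p1 w * q2 w + q1 w * p2 w) /\
       c w = f w * (q1 w * q2 w)) ->
    exists phi1 phi2 : C -> C,
      holo_on (near_ball 0 rho) phi1 /\ holo_on (near_ball 0 rho) phi2 /\
      forall p, near_ball 0 rho p ->
        stalk_exact p (Nat.div r 2 - z) p1 q1 p2 q2 phi1 phi2.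
Proof.
  intros Hrho Ha Hb Hc Hne Hzero Hsq Hr Hz.
  assert (Hle := part1 a b c r z Hr Hz).
  split; [exact Hle|].
  intros p1 q1 p2 q2 f Hp1 Hq1 Hp2 Hq2 Hf Hv1 Hv2 Hfac.
  exists (fun w => - q1 w), (fun w => p1 w).
  split; [intros w Hw; apply exd_opp; auto|]. split; [intros w Hw; auto|].
  set (k := (Nat.div r 2 - z)%nat).
  assert (K2 : forall w, near_ball 0 rho w -> w <> 0 -> p1 w * q2 w - q1 w * p2 w <> 0).
  { intros w Hw Hw0 E. apply Hw0. apply (Hzero w Hw). unfold discr.
    destruct (Hfac w Hw) as [A1 [A2 A3]]. rewrite A1, A2, A3.
    replace (f w * (p1 w * q2 w + q1 w * p2 w) * (f w * (p1 w * q2 w + q1 w * p2 w)) -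
              4 * (f w * (p1 w * p2 w)) * (f w * (q1 w * q2 w)))
      with ((f w * (p1 w * q2 w - q1 w * p2 w)) * (f w * (p1 w * q2 w - q1 w * p2 w))) by ring.
    rewrite E. ring. }
  intros p Hp.
  assert (Gp1 : germ_holo p p1) by (eapply germ_of_holo; eauto).
  assert (Gq1 : germ_holo p q1) by (eapply germ_of_holo; eauto).
  assert (Gp2 : germ_holo p p2) by (eapply germ_of_holo; eauto).
  assert (Gq2 : germ_holo p q2) by (eapply germ_of_holo; eauto).
  destruct (classic (p = 0)) as [E|E].
  - subst p.
    destruct (key0 rho a b c p1 q1 p2 q2 f r z Hrho Hp1 Hq1 Hp2 Hq2 Hf Hv1 Hv2 Hfac Hr Hz Hle)
      as [u [Gu [Hu0 Eu]]].
    apply (stalk_from_key 0 k p1 q1 p2 q2 u); auto.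
    exists rho. split; [auto|]. intros w Hw Hw0. apply K2; auto.
  - assert (Hpm : (0 < Cmod p)%R) by (apply Cmod_gt_0; auto).
    assert (Hpr : (Cmod p < rho)%R) by (apply (proj1 (nb0 _ _)); auto).
    assert (Npow : ev p (fun w => w <> 0)).
    { apply (ev_nonzero p (fun w => w) (exd_id p) E). }
    apply (stalk_from_key p k p1 q1 p2 q2 (fun w => (p1 w * q2 w - q1 w * p2 w) / w ^ k)); auto.
    + apply germ_div; [|apply germ_pow_id|apply Cpow_nz; auto].
      apply germ_minus; apply germ_mult; auto.
    + apply Cmult_neq_0; [apply K2; auto|]. apply Cinv_nz, Cpow_nz; auto.
    + eapply ev_imp; [exact Npow|]. intros w Hw. field. apply Cpow_nz; auto.
    + exists (Rmin (rho - Cmod p) (Cmod p)). split; [apply Rmin_pos; lra|].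
      intros w Hw Hwp. unfold near_ball in Hw.
      assert (H1 : (Cmod (w - p) < rho - Cmod p)%R) by (eapply Rlt_le_trans; [exact Hw|apply Rmin_l]).
      assert (H2 : (Cmod (w - p) < Cmod p)%R) by (eapply Rlt_le_trans; [exact Hw|apply Rmin_r]).
      apply K2.
      * apply (proj2 (nb0 _ _)). assert (T := Cmod_triangle (w - p) p).
        replace (w - p + p) with w in T by ring. lra.
      * intro W0. rewrite W0 in H2. replace (0 - p) with (- p) in H2 by ring. rewrite Cmod_opp in H2. lra.
Qed.
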